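(* Let $n\ge 2$, fix $\boldsymbol{\rho}^0\in\mathcal{P}_n$ and $\alpha\in(0,\infty)$, and let $\mathbf{R}=(R_1,\dots,R_n)\sim\mathrm{Mallows}(\boldsymbol{\rho}^0,\alpha)$ with the footrule distance. For $i=1,\dots,n$ let $o^0_i$ be the item with $\rho^0_{o^0_i}=i$. Then for every $j\in\{1,\dots,n-1\}$, $$\mathbb{E}[R_{o^0_j}\mid \boldsymbol{\rho}^0,\alpha] < \mathbb{E}[R_{o^0_{j+1}}\mid \boldsymbol{\rho}^0,\alpha].$$
   Context: $\mathcal{P}_n$ denotes the set of permutations of $\{1,\dots,n\}$; a ranking $\mathbf{r}\in\mathcal{P}_n$ assigns rank $r_i$ to item $i$. The footrule distance is $d(\mathbf{r},\boldsymbol{\rho})=\sum_{i=1}^n|r_i-\rho_i|$. The Mallows distribution $\mathrm{Mallows}(\boldsymbol{\rho}^0,\alpha)$ on $\mathcal{P}_n$ has probability mass function $P(\mathbf{R}=\mathbf{r}\mid\boldsymbol{\rho}^0,\alpha)=\frac{1}{Z_n(\alpha)}\exp\{-\frac{\alpha}{n}d(\mathbf{r},\boldsymbol{\rho}^0)\}$, where $Z_n(\alpha)=\sum_{\mathbf{r}\in\mathcal{P}_n}\exp\{-\frac{\alpha}{n}d(\mathbf{r},\boldsymbol{\rho}^0)\}$ (which does not depend on $\boldsymbol{\rho}^0$). *)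

(* Defs.v *)
From HB Require Import structures.
From mathcomp Require Import all_boot all_order all_algebra all_fingroup.
From mathcomp Require Import all_classical all_reals all_analysis.
Set Implicit Arguments. Unset Strict Implicit. Unset Printing Implicit Defensive.
Import Order.TTheory GRing.Theory Num.Theory.
Local Open Scope ring_scope.

(* Rankings of n items: permutations of 'I_n.  Items and ranks are 0-based
   ('I_n); the paper's rank r_i in {1..n} is (r i).+1. *)

Definition distn (a b : nat) : nat := ((a - b) + (b - a))%N.

Definition footrule (n : nat) (r rho : {perm 'I_n}) : nat :=
  (\sum_(i < n) distn (r i).+1 (rho i).+1)%N.

Definition mallows_weight (R : realType) (n : nat) (rho0 : {perm 'I_n})
  (alpha : R) (r : {perm 'I_n}) : R :=
  expR (- (alpha / n%:R) * (footrule r rho0)%:R).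

Definition mallows_Z (R : realType) (n : nat) (rho0 : {perm 'I_n}) (alpha : R) : R :=
  \sum_(r : {perm 'I_n}) mallows_weight rho0 alpha r.

Definition mallows_pmf (R : realType) (n : nat) (rho0 : {perm 'I_n}) (alpha : R)
  (r : {perm 'I_n}) : R :=
  mallows_weight rho0 alpha r / mallows_Z rho0 alpha.

Definition expected_rank (R : realType) (n : nat) (rho0 : {perm 'I_n}) (alpha : R)
  (item : 'I_n) : R :=
  \sum_(r : {perm 'I_n}) ((r item).+1)%:R * mallows_pmf rho0 alpha r.

Definition item_of_rank (n : nat) (rho0 : {perm 'I_n}) (i : 'I_n) : 'I_n :=
  (rho0^-1)%g i.

(* Main.v *)
Require Import Defs.
From HB Require Import structures.
From mathcomp Require Import all_boot all_order all_algebra all_fingroup.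
From mathcomp Require Import all_classical all_reals all_analysis.
From mathcomp Require Import lra zify.
Import Order.TTheory GRing.Theory Num.Theory.
Local Open Scope ring_scope.

Lemma dist_ineq (x y p q : nat) : (p <= q)%N -> (x <= y)%N ->
  (distn x p + distn y q <= distn y p + distn x q)%N.
Proof. rewrite /distn; lia. Qed.

Lemma foot_swap {n} (r rho : {perm 'I_n}) {a b : 'I_n} : a != b ->
 (footrule ((tperm a b) * r)%g rho + distn (r a).+1 (rho a).+1 + distn (r b).+1 (rho b).+1 =
  footrule r rho + distn (r b).+1 (rho a).+1 + distn (r a).+1 (rho b).+1)%N.
Proof.
move=> ab; rewrite /footrule (bigD1 a) //= (bigD1 b) 1?eq_sym //=.
rewrite [in RHS](bigD1 a) //= [in RHS](bigD1 b) 1?eq_sym //=.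
rewrite !permM tpermL tpermR.
rewrite (eq_bigr (fun i => distn (r i).+1 (rho i).+1)); last first.
  by move=> i /andP[ia ib]; rewrite permM tpermD // eq_sym.
set S1 := (\sum_(i | _) _)%N. 
lia.
Qed.

Lemma w_le (R : realType) n (rho : {perm 'I_n}) (alpha : R) r s :
  0 <= alpha -> (footrule r rho <= footrule s rho)%N ->
  mallows_weight rho alpha s <= mallows_weight rho alpha r.
Proof.
move=> ha hd; rewrite /mallows_weight ler_expR !mulNr lerN2 ler_wpM2l ?ler_nat //.
by rewrite divr_ge0.
Qed.

Lemma w_lt (R : realType) n (rho : {perm 'I_n}) (alpha : R) r s :
  (0 < n)%N -> 0 < alpha -> (footrule r rho < footrule s rho)%N ->
  mallows_weight rho alpha s < mallows_weight rho alpha r.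
Proof.
move=> hn ha hd; rewrite /mallows_weight ltr_expR !mulNr ltrN2 ltr_pM2l ?ltr_nat //.
by rewrite divr_gt0 // ltr0n.
Qed.

Theorem lemma1 (R : realType) (n : nat) (hn : (2 <= n)%N)
  (rho0 : {perm 'I_n}) (alpha : R) (halpha : 0 < alpha)
  (j k : 'I_n) (hjk : val k = (val j).+1) :
  expected_rank rho0 alpha (item_of_rank rho0 j) <
  expected_rank rho0 alpha (item_of_rank rho0 k).
Proof.
set a := item_of_rank rho0 j; set b := item_of_rank rho0 k.
have ra : rho0 a = j by rewrite /a /item_of_rank permKV.
have rb : rho0 b = k by rewrite /b /item_of_rank permKV.
have ab : a != b.
  apply/eqP => eab; move: ra; rewrite eab rb => ekj.
  by move: hjk; rewrite ekj; lia.
have n0 : (0 < n)%N by lia.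
set w := mallows_weight rho0 alpha.
set t := tperm a b.
have Zpos : 0 < mallows_Z rho0 alpha.
  rewrite /mallows_Z (bigD1 1%g) //= ltr_pwDl ?expR_gt0 //.
  by apply: sumr_ge0 => i _; rewrite /mallows_weight expR_ge0.
set g := fun r : {perm 'I_n} => (((r b).+1)%:R - ((r a).+1)%:R) * w r.
have hE : expected_rank rho0 alpha b - expected_rank rho0 alpha a =
   (\sum_r g r) / mallows_Z rho0 alpha.
  rewrite /expected_rank -sumrB mulr_suml; apply: eq_bigr => r _.
  by rewrite /g /mallows_pmf /w; lra.
have hh : \sum_r g r + \sum_r g r =
   \sum_(r : {perm 'I_n}) (((r b).+1)%:R - ((r a).+1)%:R) * (w r - w (t * r)%g).
  rewrite {2}(reindex_inj (mulgI t)) -big_split /=; apply: eq_bigr => r _.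
  by rewrite /g !permM tpermL tpermR; lra.
have hge : forall r : {perm 'I_n},
    0 <= (((r b).+1)%:R - ((r a).+1)%:R) * (w r - w (t * r)%g).
  have jk : (j.+1 <= k.+1)%N by rewrite hjk.
  move=> r; have := foot_swap r rho0 ab; rewrite -/t ra rb => hs.
  case: (leqP (r a) (r b)) => hr.
    apply: mulr_ge0; first by rewrite subr_ge0 ler_nat.
    rewrite subr_ge0 /w; apply: w_le; first exact: ltW.
    have := @dist_ineq (r a).+1 (r b).+1 (j.+1) (k.+1) jk hr; lia.
  apply: mulr_le0; first by rewrite subr_le0 ler_nat; lia.
  rewrite subr_le0 /w; apply: w_le; first exact: ltW.
  have := @dist_ineq (r b).+1 (r a).+1 (j.+1) (k.+1) jk (ltnW hr); lia.
have hpos : 0 < (((rho0 b).+1)%:R - ((rho0 a).+1)%:R) * (w rho0 - w (t * rho0)%g).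
  apply: mulr_gt0; first by rewrite ra rb subr_gt0 ltr_nat hjk.
  rewrite subr_gt0 /w; apply: w_lt => //.
  have := foot_swap rho0 rho0 ab; rewrite -/t ra rb hjk.
  rewrite -[\val j]/(nat_of_ord j).
  move: (nat_of_ord j) (footrule (t * rho0)%g rho0) (footrule rho0 rho0) => m F1 F0.
  rewrite /distn; lia.
have S2 : 0 < \sum_r g r + \sum_r g r.
  rewrite hh (bigD1 rho0) //=; apply: (lt_le_trans hpos).
  by rewrite lerDl; apply: sumr_ge0 => r _; apply: hge.
rewrite -subr_gt0 hE divr_gt0 //; lra.
Qed.
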